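(* Let $X$ be a super $X$-set parameter, let $G$ and $G'$ be graphs of the same order $n$, and let $\varphi:\mathfrak{X}(G)\to\mathfrak{X}(G')$ be a graph isomorphism. Then $|\varphi(S)|=|S|$ for every $X$-set $S$ of $G$ if and only if there exists a bijection $\psi:V(G)\to V(G')$ such that $\psi(S)=\varphi(S)$ for every $X$-set $S$ of $G$ (where $\psi(S)=\{\psi(s):s\in S\}$). In particular, if $|\varphi(S)|=|S|$ for every $X$-set $S$ of $G$, then the vertices of $G'$ can be relabeled so that $G$ and the relabeled graph have exactly the same $X$-sets.
   Context: All graphs are finite, simple, undirected, with nonempty vertex set. A super $X$-set parameter $X$ assigns to each graph $G$ a family of subsets of $V(G)$, called the $X$-sets of $G$, such that: every graph isomorphism maps $X$-sets to $X$-sets; every graph has at least one $X$-set; and (Superset) if $S$ is an $X$-set of $G$ and $S\subseteq S'\subseteq V(G)$, then $S'$ is an $X$-set of $G$. The $X$-TAR graph $\mathfrak{X}(G)$ has as vertices the $X$-sets of $G$, with $S_1S_2$ an edge iff $|S_1\ominus S_2|=1$. *)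

(* Defs.v *)
From mathcomp Require Import all_boot.
Unset Printing Implicit Defensive.

Record sgraph := SGraph {
  vtx : finType;
  adj : rel vtx;
  adj_sym : symmetric adj;
  adj_irr : irreflexive adj;
  vtx_nonempty : 0 < #|vtx| }.

Definition graph_iso {G H : sgraph} (f : vtx G -> vtx H) : Prop :=
  bijective f /\ forall u v, @adj H (f u) (f v) = @adj G u v.

Definition param := forall G : sgraph, pred {set vtx G}.

Definition super_param (X : param) : Prop :=
  [/\ (forall (G H : sgraph) (f : vtx G -> vtx H), graph_iso f ->
         forall S : {set vtx G}, X H (f @: S) = X G S),
      (forall G : sgraph, exists S : {set vtx G}, X G S) &
      (forall (G : sgraph) (S S' : {set vtx G}), X G S -> S \subset S' -> X G S')].

Definition symdiff {T : finType} (A B : {set T}) : {set T} := (A :\: B) :|: (B :\: A).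

(* Vertices of the X-TAR graph of G: the X-sets of G. *)
Definition Xsets (X : param) (G : sgraph) : Type := {S : {set vtx G} | X G S}.

Definition tar_adj (X : param) (G : sgraph) (S1 S2 : Xsets X G) : bool :=
  #|symdiff (val S1) (val S2)| == 1.

Definition tar_iso {X : param} {G G' : sgraph} (phi : Xsets X G -> Xsets X G') : Prop :=
  bijective phi /\ forall S1 S2, @tar_adj X G' (phi S1) (phi S2) = @tar_adj X G S1 S2.

(* Main.v *)
Require Import Defs.
From mathcomp Require Import all_boot.
From mathcomp Require Import zify.

Lemma adj_sub (T : finType) (A B : {set T}) :
  #|symdiff A B| = 1 -> #|B| = #|A| + 1 -> A \subset B.
Proof.
move=> H1 H2.
have E : #|symdiff A B| = #|A :\: B| + #|B :\: A|.
  rewrite /symdiff cardsU.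
  have -> : (A :\: B) :&: (B :\: A) = set0.
    by apply/setP=> y; rewrite !inE; case: (y \in A); case: (y \in B).
  by rewrite cards0 subn0.
have E1 := cardsID B A. have E2 := cardsID A B. rewrite setIC in E2.
have : #|A :\: B| = 0 by lia.
by move/eqP; rewrite cards_eq0 setD_eq0.
Qed.

Lemma in_setC1_sub (T : finType) (A : {set T}) (u : T) :
  (A \subset [set~ u]) = (u \notin A).
Proof. by rewrite subsetC sub1set inE. Qed.

Lemma hard (X : param) (HX : super_param X) (G G' : sgraph)
  (HG : #|vtx G| = #|vtx G'|)
  (phi : Xsets X G -> Xsets X G') (Hphi : tar_iso phi)
  (Hsz : forall S : Xsets X G, #|val (phi S)| = #|val S|) :
  exists psi : vtx G -> vtx G', bijective psi /\
      forall S : Xsets X G, psi @: val S = val (phi S).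
Proof.
case: HX => _ _ Hup.
case: Hphi => [[phinv phiK phiK'] Hadj].
have n0 : 0 < #|vtx G'| by exact: vtx_nonempty.
have [y0 _] : exists y0 : vtx G', true.
  by move: n0; rewrite -cardsT card_gt0 => /set0Pn [y _]; exists y.
have mono : forall k (S T : Xsets X G), #|val T :\: val S| = k ->
    val S \subset val T -> val (phi S) \subset val (phi T).
  elim=> [|k IH] S T Hk HST.
    have ST : S = T.
      apply: val_inj; apply/eqP; rewrite eqEsubset HST /=.
      by rewrite -setD_eq0 -cards_eq0 Hk.
    by rewrite ST.
  have [x xTS] : exists x, x \in val T :\: val S.
    by apply/set0Pn; rewrite -cards_eq0 Hk.
  move: (xTS); rewrite inE => /andP [xS xT].
  have HS' : X G (x |: val S) by apply: (Hup _ (val S)); [exact: valP | exact: subsetUr].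
  set S' : Xsets X G := exist _ (x |: val S) HS'.
  have adjSS' : tar_adj X G S S'.
    rewrite /tar_adj /=.
    have -> : symdiff (val S) (x |: val S) = [set x].
      apply/setP=> y; rewrite /symdiff !inE.
      case: eqP => [->|_]; first by rewrite (negbTE xS).
      by case: (y \in val S).
    by rewrite cards1.
  have sub1 : val (phi S) \subset val (phi S').
    apply: adj_sub.
      by have := Hadj S S'; rewrite adjSS' /tar_adj => /eqP.
    by rewrite !Hsz /= cardsU1 xS addnC.
  apply: subset_trans sub1 _; apply: IH.
    rewrite /= setUC -setDDl.
    move: Hk; rewrite (cardsD1 x (val T :\: val S)) xTS /=; lia.
  by rewrite /= subUset sub1set xT HST.
pose psi0 (u : vtx G) : vtx G' :=
  if insub [set~ u] is Some s then odflt y0 [pick a in ~: val (phi (s : Xsets X G))]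
  else y0.
have key : forall u (H : X G [set~ u]),
    ~: val (phi (exist _ [set~ u] H)) = [set psi0 u].
  move=> u H.
  have : #|~: val (phi (exist _ [set~ u] H))| == 1.
    have := cardsC (val (phi (exist _ [set~ u] H))).
    rewrite Hsz /= cardsC1 -HG; lia.
  case/cards1P=> a Ha.
  rewrite /psi0 (insubT (fun S => X G S) H) /= Ha.
  case: pickP => [b|]; first by rewrite inE => /eqP ->.
  by move/(_ a); rewrite set11.
pose D := [set u | X G [set~ u]].
pose D' := [set a | X G' [set~ a]].
have psi0D : forall u, u \in D -> psi0 u \in D'.
  move=> u; rewrite inE => H; rewrite inE.
  have <- : ~: ~: val (phi (exist _ [set~ u] H)) = [set~ psi0 u] by rewrite key.
  by rewrite setCK; exact: valP.
have psi0inj : {in D &, injective psi0}.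
  move=> u w; rewrite !inE => Hu Hw E.
  have : phi (exist _ [set~ u] Hu) = phi (exist _ [set~ w] Hw).
    apply: val_inj; apply: setC_inj; by rewrite !key E.
  move/(f_equal phinv); rewrite !phiK => /(f_equal val) /= /setC_inj.
  by move/set1_inj.
have psi0surj : forall a, a \in D' -> exists2 u, u \in D & psi0 u = a.
  move=> a; rewrite inE => Ha.
  set s := phinv (exist _ [set~ a] Ha).
  have ps : phi s = exist _ [set~ a] Ha by rewrite /s phiK'.
  have : #|~: val s| == 1.
    have := cardsC (val s). have := Hsz s. rewrite ps /= cardsC1 HG. lia.
  case/cards1P=> u Hu.
  have vs : val s = [set~ u] by rewrite -Hu setCK.
  have Hu' : X G [set~ u] by rewrite -vs; exact: valP.
  exists u; first by rewrite inE.
  have es : s = exist _ [set~ u] Hu' by apply: val_inj.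
  have := key u Hu'; rewrite -es ps /= setCK => /set1_inj.
  by [].
have imD : psi0 @: D = D'.
  apply/setP=> a; apply/imsetP/idP.
    by case=> u uD ->; exact: psi0D.
  by move/psi0surj => [u uD <-]; exists u.
have cardC : #|~: D| = #|~: D'|.
  have := cardsC D. have := cardsC D'.
  rewrite -imD card_in_imset //; lia.
pose psi (u : vtx G) : vtx G' :=
  if u \in D then psi0 u else nth y0 (enum (~: D')) (index u (enum (~: D))).
have psiN : forall u, u \notin D -> psi u \notin D'.
  move=> u uD; rewrite /psi (negbTE uD).
  rewrite -in_setC -mem_enum; apply: mem_nth.
  by rewrite -!cardE -cardC cardE index_mem mem_enum inE.
have psiinj : injective psi.
  move=> u w.
  case uD: (u \in D); case wD: (w \in D).
  - by rewrite /psi uD wD; apply: psi0inj.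
  - move=> E; have := psiN w; rewrite wD -E /psi uD => /(_ isT).
    by rewrite psi0D.
  - move=> E; have := psiN u; rewrite uD E /psi wD => /(_ isT).
    by rewrite psi0D.
  - rewrite /psi uD wD => E.
    have lu : index u (enum (~: D)) < size (enum (~: D'))
      by rewrite -!cardE -cardC cardE index_mem mem_enum inE uD.
    have lw : index w (enum (~: D)) < size (enum (~: D'))
      by rewrite -!cardE -cardC cardE index_mem mem_enum inE wD.
    have := f_equal (fun a => index a (enum (~: D'))) E.
    rewrite /= !index_uniq ?enum_uniq // => Ei.
    have := f_equal (fun i => nth u (enum (~: D)) i) Ei.
    by rewrite !nth_index // mem_enum inE ?uD ?wD.
have psibij : bijective psi by apply: inj_card_bij => //; rewrite HG.
exists psi; split => // S.
have out : forall u, u \notin val S -> psi u \notin val (phi S).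
  move=> u uS.
  have Hu : X G [set~ u] by apply: (Hup _ (val S)); [exact: valP | rewrite in_setC1_sub].
  have uD : u \in D by rewrite inE.
  have := mono _ S (exist _ [set~ u] Hu) erefl; rewrite /= in_setC1_sub => /(_ uS).
  move=> sub; apply/negP => /(subsetP sub).
  move=> Hin; have : psi u \in ~: val (phi (exist _ [set~ u] Hu)).
    by rewrite key /psi uD set11.
  by rewrite inE Hin.
case: psibij => psinv psiK psiK'.
apply/esym/eqP; rewrite eqEcard card_imset ?Hsz ?leqnn; last exact: psiinj.
rewrite andbT; apply/subsetP => a aS.
rewrite -(psiK' a); apply: imset_f.
case: (boolP (psinv a \in val S)) => // nS.
by have := out _ nS; rewrite psiK' aS.
Qed.

Theorem theorem2p25 (X : param) (HX : super_param X) (n : nat)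
  (G G' : sgraph) (HG : #|vtx G| = n) (HG' : #|vtx G'| = n)
  (phi : Xsets X G -> Xsets X G') (Hphi : tar_iso phi) :
  ((forall S : Xsets X G, #|val (phi S)| = #|val S|) <->
   (exists psi : vtx G -> vtx G', bijective psi /\
      forall S : Xsets X G, psi @: val S = val (phi S)))
  /\
  ((forall S : Xsets X G, #|val (phi S)| = #|val S|) ->
   exists psi : vtx G -> vtx G', bijective psi /\
      forall S : {set vtx G}, X G S = X G' (psi @: S)).
Proof.
have HGG : #|vtx G| = #|vtx G'| by rewrite HG HG'.
have E : (forall S : Xsets X G, #|val (phi S)| = #|val S|) <->
   (exists psi : vtx G -> vtx G', bijective psi /\
      forall S : Xsets X G, psi @: val S = val (phi S)).
  split; first exact: hard.
  case=> psi [bij Hp] S; rewrite -Hp card_imset //; exact: bij_inj.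
split => //.
move/E => [psi [bij Hp]]; exists psi; split => // S.
case: Hphi => [[phinv phiK phiK'] _].
apply/idP/idP => H.
  by have := Hp (exist _ S H) => /= ->; exact: valP.
set s := phinv (exist _ (psi @: S) H).
have : psi @: val s = psi @: S by rewrite Hp /s phiK'.
move/(imset_inj (bij_inj bij)) => <-; exact: valP.
Qed.
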